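(* For every $n\equiv 2\pmod 4$ with $n\ge 6$, there exists a Heffter array $H(n;5)$.
   Context: A Heffter array $H(n;k)$ is an $n\times n$ array in which some cells are filled with nonzero integers and the others are empty, such that: each row and each column contains exactly $k$ filled cells; the entries of every row and of every column sum to $0$ modulo $2nk+1$; and for each integer $1\le x\le nk$, exactly one of $x$ or $-x$ appears in the array, and it appears exactly once. *)

(* Defs.v *)
From HB Require Import structures.
From mathcomp Require Import all_boot all_order all_algebra.
Set Implicit Arguments. Unset Strict Implicit. Unset Printing Implicit Defensive.
Import Order.TTheory GRing.Theory Num.Theory.

Definition parray (n : nat) := 'I_n -> 'I_n -> option int.

Definition cellv (c : option int) : int := if c is Some v then v else 0%R.

Definition filled (c : option int) : bool := c != None.

Definition is_heffter (n k : nat) (A : parray n) : Prop :=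
  (forall i : 'I_n, #|[set j : 'I_n | filled (A i j)]| = k) /\
  (forall j : 'I_n, #|[set i : 'I_n | filled (A i j)]| = k) /\
  (forall i j : 'I_n, forall v : int, A i j = Some v -> v != 0%R) /\
  (forall i : 'I_n, ((Posz (2 * n * k).+1) %| (\sum_(j < n) cellv (A i j))%R)%Z) /\
  (forall j : 'I_n, ((Posz (2 * n * k).+1) %| (\sum_(i < n) cellv (A i j))%R)%Z) /\
  (forall x : nat, 1 <= x <= n * k ->
     #|[set p : 'I_n * 'I_n |
        (A p.1 p.2 == Some (Posz x)) || (A p.1 p.2 == Some (- Posz x)%R)]| = 1) /\
  (forall i j : 'I_n, forall v : int, A i j = Some v ->
     (1 <= `|v|%N <= n * k)%N).
Arguments is_heffter n k A : clear implicits.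

(* Main.v *)
Require Import Defs.
From mathcomp Require Import all_boot all_order all_algebra.

Section Support.
Lemma sum_support (R : Type) (idx : R) (op : Monoid.com_law idx) (n : nat)
  (g : nat -> R) (s : seq nat) :
  uniq s -> all (fun j => j < n) s -> (forall j, j < n -> j \notin s -> g j = idx) ->
  \big[op/idx]_(j < n) g j = \big[op/idx]_(j <- s) g j.
Proof.
move=> us sn g0.
rewrite -(big_mkord xpredT) (bigID (fun j => j \in s)) /=.
have -> : \big[op/idx]_(0 <= i < n | i \notin s) g i = idx.
  apply: big1_seq => j /andP[js]; rewrite mem_iota ?subn0 ?add0n => /andP[_ jn]; exact: g0 jn js.
rewrite Monoid.mulm1 -big_filter; apply: perm_big; apply: uniq_perm => //.
  by apply: filter_uniq; apply: iota_uniq.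
move=> x; rewrite mem_filter mem_iota ?subn0 ?add0n /=; case xs: (x \in s) => //=.
by move/allP: sn => /(_ x xs) ->.
Qed.
End Support.

From mathcomp Require Import zify.
Import GRing.Theory Num.Theory.

Definition dg (h I J : nat) : nat := if I <= J then J - I else J + h - I.

Definition v0 (h I : nat) (r : bool) : int :=
  if r then (Posz (5*h) - Posz I)%R else Posz (6*h+1+I).
Definition v1 (h I : nat) (r c : bool) : int :=
  match r, c with
  | false, false => (- Posz (2 + 2*I))%R
  | false, true => (Posz I - Posz (6*h))%R
  | true, false => Posz (1 + 2*I)
  | true, true => (- Posz (7*h+1+I))%R
  end.
Definition v2 (h J : nat) (r c : bool) : int :=
  match r, c with
  | false, false => (Posz (4*h) - Posz (2*J))%R
  | false, true => (Posz (1 + 2*J) - Posz (4*h))%R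
  | true, false => (Posz J - Posz (10*h))%R
  | true, true => (- Posz (8*h+1+J))%R
  end.

Definition G (h I J : nat) (r c : bool) : option int :=
  let D := dg h I J in
  if D == 0 then (if r == c then Some (v0 h I r) else None)
  else if D == 1 then Some (v1 h I r c)
  else if D == 2 then Some (v2 h J r c) else None.

Definition nx (h I d : nat) := if I + d < h then I + d else I + d - h.
Definition pv (h J d : nat) := if d <= J then J - d else J + h - d.
Definition mk (b : bool) (x : nat) : nat := b + x.*2.
Lemma mk_half b x : (mk b x)./2 = x. Proof. by rewrite /mk half_bit_double. Qed.
Lemma mk_odd b x : odd (mk b x) = b. Proof. by rewrite /mk oddD odd_double addbF; case: b. Qed.
Lemma mkE j : mk (odd j) j./2 = j. Proof. by rewrite /mk odd_double_half. Qed.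
Definition rowcols h I (r : bool) := [:: mk r I; mk false (nx h I 1); mk true (nx h I 1); mk false (nx h I 2); mk true (nx h I 2)].
Definition colrows h J (c : bool) := [:: mk c J; mk false (pv h J 1); mk true (pv h J 1); mk false (pv h J 2); mk true (pv h J 2)].
Ltac dest := repeat match goal with
 | |- context [if ?b then _ else _] => let E := fresh "E" in case E: b
 | H : context [if ?b then _ else _] |- _ => let E := fresh "E" in case E: b in H
 end.
Lemma G_row h I r J c : 2 < h -> I < h -> J < h -> G h I J r c != None -> mk c J \in rowcols h I r.
Proof.
move=> h3 ih jh; rewrite /G /dg /rowcols /nx /mk !inE.
case: r; case: c => /=; dest => //; lia.
Qed.
Lemma G_col h I r J c : 2 < h -> I < h -> J < h -> G h I J r c != None -> mk r I \in colrows h J c.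
Proof.
move=> h3 ih jh; rewrite /G /dg /colrows /pv /mk !inE.
case: r; case: c => /=; dest => //; lia.
Qed.
Lemma rowcols_ok h I r : 2 < h -> I < h -> uniq (rowcols h I r) /\ all (fun j => j < h.*2) (rowcols h I r).
Proof.
move=> h3 ih; rewrite /rowcols /nx /mk /= ?inE; case: r; dest; split; lia.
Qed.
Lemma colrows_ok h J c : 2 < h -> J < h -> uniq (colrows h J c) /\ all (fun j => j < h.*2) (colrows h J c).
Proof.
move=> h3 ih; rewrite /colrows /pv /mk /= ?inE; case: c; dest; split; lia.
Qed.
Lemma G_0 h I r : 2 < h -> I < h -> G h I I r r = Some (v0 h I r).
Proof. move=> h3 ih; rewrite /G /dg /= leqnn subnn eqxx /=; by case: r. Qed.
Lemma G_1 h I r c : 2 < h -> I < h -> G h I (nx h I 1) r c = Some (v1 h I r c).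
Proof. move=> h3 ih; rewrite /G /dg /nx; dest => //; exfalso; lia. Qed.
Lemma G_2 h I r c : 2 < h -> I < h -> G h I (nx h I 2) r c = Some (v2 h (nx h I 2) r c).
Proof. move=> h3 ih; rewrite /G /dg /nx; dest => //; exfalso; lia. Qed.
Lemma G_1' h J r c : 2 < h -> J < h -> G h (pv h J 1) J r c = Some (v1 h (pv h J 1) r c).
Proof. move=> h3 ih; rewrite /G /dg /pv; dest => //; exfalso; lia. Qed.
Lemma G_2' h J r c : 2 < h -> J < h -> G h (pv h J 2) J r c = Some (v2 h J r c).
Proof. move=> h3 ih; rewrite /G /dg /pv; dest => //; exfalso; lia. Qed.
Lemma nx_lt h I d : 2 < h -> I < h -> d < h -> nx h I d < h.
Proof. rewrite /nx; dest; lia. Qed.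
Lemma pv_lt h J d : 2 < h -> J < h -> d < h -> pv h J d < h.
Proof. rewrite /pv; dest; lia. Qed.

Lemma G_val h I J r c v : 2 < h -> I < h -> J < h -> G h I J r c = Some v ->
  (1 <= `|v|%N <= 10 * h)%N.
Proof.
move=> h3 ih jh; rewrite /G /dg.
case: r; case: c => /=; dest => //= -[<-]; rewrite /v0 /v1 /v2; lia.
Qed.

Lemma G_surj h x : 2 < h -> 1 <= x <= 10 * h ->
  exists I J r c, [/\ I < h, J < h & (G h I J r c = Some (Posz x) \/ G h I J r c = Some (- Posz x)%R)].
Proof.
move=> h3 xr.
have hx := odd_double_half x.
have [x1|x1] := leqP x (2*h).
  case ox: (odd x).
    exists (x./2), (nx h x./2 1), true, false; split; [lia| apply: nx_lt; lia|left].
    rewrite G_1 /v1; [congr Some; lia|lia|lia].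
  exists (x./2 - 1), (nx h (x./2 - 1) 1), false, false; split; [lia| apply: nx_lt; lia|right].
  rewrite G_1 /v1; [congr Some; lia|lia|lia].
have [x2|x2] := leqP x (4*h).
  case ox: (odd x).
    exists (pv h (2*h - 1 - x./2) 2), (2*h - 1 - x./2), false, true; split; [apply: pv_lt; lia|lia|right].
    rewrite G_2' /v2; [congr Some; lia|lia|lia].
  exists (pv h (2*h - x./2) 2), (2*h - x./2), false, false; split; [apply: pv_lt; lia|lia|left].
  rewrite G_2' /v2; [congr Some; lia|lia|lia].
have [x3|x3] := leqP x (5*h).
  exists (5*h - x), (5*h - x), true, true; split; [lia|lia|left].
  rewrite G_0 /v0; [congr Some; lia|lia|lia].
have [x4|x4] := leqP x (6*h).
  exists (6*h - x), (nx h (6*h - x) 1), false, true; split; [lia| apply: nx_lt; lia|right].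
  rewrite G_1 /v1; [congr Some; lia|lia|lia].
have [x5|x5] := leqP x (7*h).
  exists (x - 6*h - 1), (x - 6*h - 1), false, false; split; [lia|lia|left].
  rewrite G_0 /v0; [congr Some; lia|lia|lia].
have [x6|x6] := leqP x (8*h).
  exists (x - 7*h - 1), (nx h (x - 7*h - 1) 1), true, true; split; [lia| apply: nx_lt; lia|right].
  rewrite G_1 /v1; [congr Some; lia|lia|lia].
have [x7|x7] := leqP x (9*h).
  exists (pv h (x - 8*h - 1) 2), (x - 8*h - 1), true, true; split; [apply: pv_lt; lia|lia|right].
  rewrite G_2' /v2; [congr Some; lia|lia|lia].
exists (pv h (10*h - x) 2), (10*h - x), true, false; split; [apply: pv_lt; lia|lia|right].
rewrite G_2' /v2; [congr Some; lia|lia|lia].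
Qed.

Lemma row_sum h I r : 2 < h -> I < h ->
  (\sum_(j <- rowcols h I r) cellv (G h I j./2 r (odd j)))%R = if r then (- Posz (20*h+1))%R else 0%R.
Proof.
move=> h3 ih; rewrite /rowcols !big_cons big_nil !mk_half !mk_odd.
rewrite G_0 ?G_1 ?G_2 //= /v0 /v1 /v2; case: r; lia.
Qed.

Lemma col_sum h J c : 2 < h -> J < h ->
  (\sum_(i <- colrows h J c) cellv (G h i./2 J (odd i) c))%R = if c then (- Posz (20*h+1))%R else 0%R.
Proof.
move=> h3 ih; rewrite /colrows !big_cons big_nil !mk_half !mk_odd.
rewrite G_0 ?G_1' ?G_2' //= /v0 /v1 /v2; case: c; lia.
Qed.

Lemma row_cnt h I r : 2 < h -> I < h ->
  \sum_(j <- rowcols h I r) (if filled (G h I j./2 r (odd j)) then 1 else 0) = 5.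
Proof.
move=> h3 ih; rewrite /rowcols !big_cons big_nil !mk_half !mk_odd.
by rewrite G_0 ?G_1 ?G_2.
Qed.

Lemma col_cnt h J c : 2 < h -> J < h ->
  \sum_(i <- colrows h J c) (if filled (G h i./2 J (odd i) c) then 1 else 0) = 5.
Proof.
move=> h3 ih; rewrite /colrows !big_cons big_nil !mk_half !mk_odd.
by rewrite G_0 ?G_1' ?G_2'.
Qed.

Lemma G_inj h I J r c I' J' r' c' v v' :
  2 < h -> I < h -> J < h -> I' < h -> J' < h ->
  G h I J r c = Some v -> G h I' J' r' c' = Some v' -> `|v|%N = `|v'|%N ->
  [/\ I = I', J = J', r = r' & c = c'].
Proof.
move=> h3 Ih Jh I'h J'h.
rewrite /G /dg.
case: r; case: c; case: r'; case: c' => /=;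
(case: (leqP I J) => h1; case: (leqP I' J') => h2);
repeat (case: eqP => //= ?);
move=> [<-] [<-]; rewrite /v0 /v1 /v2 => ?; split; lia.
Qed.

Theorem lemma7p1 (n : nat) :
  6 <= n -> n %% 4 = 2 -> exists A : parray n, is_heffter n 5 A.
Proof.
move=> n6 n4.
set h := n./2.
have nh : n = h.*2 by rewrite /h; lia.
have h3 : 2 < h by lia.
have lt_half : forall i : 'I_n, i./2 < h by move=> i; have := ltn_ord i; lia.
exists (fun i j : 'I_n => G h (nat_of_ord i)./2 (nat_of_ord j)./2 (odd i) (odd j)).
split; [|split; [|split; [|split; [|split; [|split]]]]].
-
  move=> i.
  rewrite -sum1_card (eq_bigl (fun j : 'I_n => filled (G h i./2 j./2 (odd i) (odd j)))); last first.
    by move=> j; rewrite inE.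
  rewrite big_mkcond /=.
  have [u a] := rowcols_ok h i./2 (odd i) h3 (lt_half i).
  rewrite (sum_support _ _ _ n (fun j => if filled (G h i./2 j./2 (odd i) (odd j)) then 1 else 0) _ u); last 2 first.
  + by move: a; rewrite -nh.
  + move=> j jn jn'; case Hf: (filled _) => //.
    move: jn'; rewrite -(mkE j) G_row //; by [apply: lt_half|rewrite nh in jn; lia].
  by rewrite row_cnt //.
-
  move=> j.
  rewrite -sum1_card (eq_bigl (fun i : 'I_n => filled (G h i./2 j./2 (odd i) (odd j)))); last first.
    by move=> i; rewrite inE.
  rewrite big_mkcond /=.
  have [u a] := colrows_ok h j./2 (odd j) h3 (lt_half j).
  rewrite (sum_support _ _ _ n (fun i => if filled (G h i./2 j./2 (odd i) (odd j)) then 1 else 0) _ u); last 2 first.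
  + by move: a; rewrite -nh.
  + move=> i iN iN'; case Hf: (filled _) => //.
    move: iN'; rewrite -(mkE i) G_col //; by [apply: lt_half|rewrite nh in iN; lia].
  by rewrite col_cnt //.
-
  move=> i j v Hv.
  have := G_val _ _ _ _ _ _ h3 (lt_half i) (lt_half j) Hv; lia.
-
  move=> i.
  have [u a] := rowcols_ok h i./2 (odd i) h3 (lt_half i).
  rewrite (sum_support _ _ _ n (fun j => cellv (G h i./2 j./2 (odd i) (odd j))) _ u); last 2 first.
  + by move: a; rewrite -nh.
  + move=> j jn jn'; case Hf: (G _ _ _ _ _) => [v|] //.
    have jh : j./2 < h by rewrite nh in jn; lia.
    have := G_row h i./2 (odd i) j./2 (odd j) h3 (lt_half i) jh; rewrite Hf mkE => /(_ isT).
    by rewrite (negbTE jn').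
  rewrite row_sum ?(lt_half i) //.
  have -> : (2 * n * 5).+1 = 20 * h + 1 by lia.
  by case: (odd i); rewrite dvdzE ?abszN ?dvdnn ?dvdn0.
-
  move=> j.
  have [u a] := colrows_ok h j./2 (odd j) h3 (lt_half j).
  rewrite (sum_support _ _ _ n (fun i => cellv (G h i./2 j./2 (odd i) (odd j))) _ u); last 2 first.
  + by move: a; rewrite -nh.
  + move=> i iN iN'; case Hf: (G _ _ _ _ _) => [v|] //.
    have ih : i./2 < h by rewrite nh in iN; lia.
    have := G_col h i./2 (odd i) j./2 (odd j) h3 ih (lt_half j); rewrite Hf mkE => /(_ isT).
    by rewrite (negbTE iN').
  rewrite col_sum ?(lt_half j) //.
  have -> : (2 * n * 5).+1 = 20 * h + 1 by lia.
  by case: (odd j); rewrite dvdzE ?abszN ?dvdnn ?dvdn0.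
-
  move=> x /andP[x1 x2].
  have [I [J [r [c [Ih Jh HG]]]]] := G_surj h x h3 (ltac:(lia)).
  have lr : mk r I < n by rewrite nh /mk; have := leq_b1 r; lia.
  have lc : mk c J < n by rewrite nh /mk; have := leq_b1 c; lia.
  rewrite (_ : [set p | _] = [set (Ordinal lr, Ordinal lc)]) ?cards1 //.
  apply/setP => -[i j]; rewrite !inE /=.
  apply/idP/idP.
  + move=> Hp.
    have [v [Hg Hv]] : exists v, G h i./2 j./2 (odd i) (odd j) = Some v /\ `|v|%N = x.
      by case/orP: Hp => /eqP Hg; [exists (Posz x)|exists (- Posz x)%R]; split => //; lia.
    have [w [Hw Hwx]] : exists w, G h I J r c = Some w /\ `|w|%N = x.
      by case: HG => Hg'; [exists (Posz x)|exists (- Posz x)%R]; split => //; lia.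
    have [e1 e2 e3 e4] := G_inj _ _ _ _ _ _ _ _ _ _ _ h3 (lt_half i) (lt_half j) Ih Jh Hg Hw (etrans Hv (esym Hwx)).
    rewrite xpair_eqE; apply/andP; split; apply/eqP/val_inj => /=.
    * by rewrite -(mkE i) e1 e3.
    * by rewrite -(mkE j) e2 e4.
  + move/eqP => [-> ->] /=.
    rewrite !mk_half !mk_odd.
    by case: HG => ->; rewrite eqxx ?orbT.
-
  move=> i j v Hv.
  have := G_val _ _ _ _ _ _ h3 (lt_half i) (lt_half j) Hv; lia.
Qed.
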